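(* Let $\mathbf n\ge 2$ and let $A,B,C\cong\mathbb C^{\mathbf n^2}$ have bases $\{x^i_j\},\{y^j_k\},\{z^k_i\}$ ($1\le i,j,k\le\mathbf n$). Let $M_{\langle\mathbf n\rangle}=\sum_{i,j,k=1}^{\mathbf n}x^i_j\otimes y^j_k\otimes z^k_i$ and let $$M^{red}_{\langle\mathbf n\rangle}=M_{\langle\mathbf n\rangle}-\sum_{j=1}^{\mathbf n}x^1_{\mathbf n}\otimes y^{\mathbf n}_j\otimes z^j_1.$$ Then $\underline{\mathbf R}(M_{\langle\mathbf n\rangle})\ge\underline{\mathbf R}(M^{red}_{\langle\mathbf n\rangle})+1$.
   Context: The border rank $\underline{\mathbf R}(T)$ of a tensor $T$ is the smallest $r$ such that $T$ is a limit of sums of $r$ rank one tensors $a\otimes b\otimes c$. $M_{\langle\mathbf n\rangle}$ is the $\mathbf n\times\mathbf n$ matrix multiplication tensor. *)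

(* Defs.v *)
From Stdlib Require Import Reals Lra Lia Arith.
Open Scope R_scope.

Definition Cx : Type := (R * R)%type.
Definition C0 : Cx := (0, 0).
Definition C1 : Cx := (1, 0).
Definition Cadd (z w : Cx) : Cx := (fst z + fst w, snd z + snd w).
Definition Copp (z : Cx) : Cx := (- fst z, - snd z).
Definition Csub (z w : Cx) : Cx := Cadd z (Copp w).
Definition Cmul (z w : Cx) : Cx :=
  (fst z * fst w - snd z * snd w, fst z * snd w + snd z * fst w).
Definition Cmod (z : Cx) : R := sqrt (fst z * fst z + snd z * snd z).

Fixpoint Csum (r : nat) (f : nat -> Cx) : Cx :=
  match r with
  | O => C0
  | S r' => Cadd (Csum r' f) (f r')
  end.

(** A = B = C = C^(n^2): coordinates are indexed by pairs (i, j) with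
    0 <= i, j < n (0-based version of the paper's 1..n).
    A vector is a function from index pairs to Cx; a tensor in A ⊗ B ⊗ C is
    a function of three index pairs (only indices in range matter). *)
Definition idx := (nat * nat)%type.
Definition vec := idx -> Cx.
Definition tensor := idx -> idx -> idx -> Cx.

Definition in_range (n : nat) (p : idx) : Prop := (fst p < n)%nat /\ (snd p < n)%nat.

Definition sum_rank_one (r : nat) (a b c : nat -> vec) : tensor :=
  fun p q s => Csum r (fun l => Cmul (Cmul (a l p) (b l q)) (c l s)).

(** T is a limit of sums of r rank-one tensors (Euclidean topology on the
    finite-dimensional space A⊗B⊗C, expressed coordinatewise). *)
Definition border_rank_le (n : nat) (T : tensor) (r : nat) : Prop :=
  forall eps : R, eps > 0 ->
    exists a b c : nat -> vec,
      forall p q s, in_range n p -> in_range n q -> in_range n s ->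
        Cmod (Csub (T p q s) (sum_rank_one r a b c p q s)) < eps.

Definition is_border_rank (n : nat) (T : tensor) (br : nat) : Prop :=
  border_rank_le n T br /\ (forall r, border_rank_le n T r -> (br <= r)%nat).

(** Basis tensors: x^i_j ↔ (i,j), y^j_k ↔ (j,k), z^k_i ↔ (k,i). *)
Definition basis3 (p0 q0 s0 : idx) : tensor :=
  fun p q s =>
    if (Nat.eqb (fst p) (fst p0) && Nat.eqb (snd p) (snd p0)
        && Nat.eqb (fst q) (fst q0) && Nat.eqb (snd q) (snd q0)
        && Nat.eqb (fst s) (fst s0) && Nat.eqb (snd s) (snd s0))%bool
    then C1 else C0.

Fixpoint tsum (m : nat) (f : nat -> tensor) : tensor :=
  match m with
  | O => fun _ _ _ => C0
  | S m' => fun p q s => Cadd (tsum m' f p q s) (f m' p q s)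
  end.

Definition tsub (T U : tensor) : tensor := fun p q s => Csub (T p q s) (U p q s).

Definition matmul_tensor (n : nat) : tensor :=
  tsum n (fun i => tsum n (fun j => tsum n (fun k =>
    basis3 (i, j) (j, k) (k, i)))).

(** M^red_<n> = M_<n> - sum_j x^1_n ⊗ y^n_j ⊗ z^j_1  (1 ↦ 0, n ↦ n-1). *)
Definition matmul_red (n : nat) : tensor :=
  tsub (matmul_tensor n)
       (tsum n (fun j => basis3 (0%nat, (n - 1)%nat) ((n - 1)%nat, j) (j, 0%nat))).

(* Main.v *)
Require Import Defs.
From Stdlib Require Import Reals Arith Lra Lia Ring Field Classical List.
From Coquelicot Require Import Coquelicot.

Local Open Scope C_scope.

Ltac toC := match goal with |- ?a = ?b => change (@eq C a b) end.
Ltac cring := toC; try change Cmul with Cmult; try change Cadd with Cplus; try change Csub with Cminus; try change Defs.Copp with Copp; try change Defs.C0 with (RtoC 0); try change Defs.C1 with (RtoC 1); ring.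

Lemma Cmod_eq z : Defs.Cmod z = Cmod z.
Proof. unfold Defs.Cmod, Cmod. f_equal. simpl. ring. Qed.

Lemma Csum_S r f : Csum (S r) f = Csum r f + f r.
Proof. reflexivity. Qed.

Lemma Csum_0 f : Csum 0 f = (0:C).
Proof. reflexivity. Qed.

Lemma Csum_ext r f g : (forall l, (l < r)%nat -> f l = g l) -> Csum r f = Csum r g.
Proof.
  induction r; intros H; [reflexivity|].
  rewrite !Csum_S, IHr by (intros; apply H; lia). rewrite H by lia. reflexivity.
Qed.

Lemma Csum_zero r f : (forall l, (l < r)%nat -> f l = (0:C)) -> Csum r f = (0:C).
Proof.
  induction r; intros H; [reflexivity|].
  rewrite Csum_S, IHr by (intros; apply H; lia). rewrite H by lia. cring.
Qed.

Lemma Csum_supp n f K : (forall m, (m < n)%nat -> m <> K -> f m = (0:C)) ->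
  Csum n f = if (K <? n)%nat then f K else (0:C).
Proof.
  induction n; intros H; [reflexivity|].
  rewrite Csum_S, IHn by (intros; apply H; lia).
  destruct (Nat.ltb_spec K n); destruct (Nat.ltb_spec K (S n)); try lia.
  - rewrite (H n) by lia. cring.
  - assert (K = n) by lia. subst. cring.
  - rewrite (H n) by lia. cring.
Qed.

Lemma Csum_lin r f g w : Csum r (fun l => f l - w * g l) = Csum r f - w * Csum r g.
Proof.
  induction r; [simpl; unfold C0; apply injective_projections; simpl; ring|].
  rewrite !Csum_S, IHr. cring.
Qed.

Lemma Csum_scal r f k : Csum r (fun l => k * f l) = k * Csum r f.
Proof.
  induction r; [simpl; unfold C0; apply injective_projections; simpl; ring|].
  rewrite !Csum_S, IHr. cring.
Qed.

Definition skip (l0 l : nat) : nat := if (l <? l0)%nat then l else S l.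

Lemma Csum_skip r' l0 f : (l0 <= r')%nat -> f l0 = (0:C) ->
  Csum (S r') f = Csum r' (fun l => f (skip l0 l)).
Proof.
  induction r'; intros Hl Hf.
  - assert (l0 = 0%nat) by lia. subst. rewrite Csum_S, Hf. simpl. unfold C0.
    apply injective_projections; simpl; ring.
  - destruct (Nat.eq_dec l0 (S r')).
    + subst. rewrite Csum_S, Hf.
      rewrite (Csum_ext (S r') (fun l => f (skip (S r') l)) f).
      * cring.
      * intros l Hl'. unfold skip. destruct (Nat.ltb_spec l (S r')); [reflexivity|lia].
    + rewrite Csum_S, IHr'; [|lia|exact Hf]. rewrite Csum_S.
      replace (skip l0 r') with (S r') by (unfold skip; destruct (Nat.ltb_spec r' l0); lia). reflexivity.
Qed.

Lemma tsum_Csum m f p q s : tsum m f p q s = Csum m (fun i => f i p q s).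
Proof. induction m; [reflexivity|]. simpl. rewrite IHm. reflexivity. Qed.

Ltac bdestr := repeat match goal with
  | |- context [Nat.eqb ?x ?y] => destruct (Nat.eqb_spec x y)
  | |- context [Nat.ltb ?x ?y] => destruct (Nat.ltb_spec x y)
  end.

Definition Mb (n : nat) (p q s : idx) : bool :=
  ((fst p <? n)%nat && (snd p <? n)%nat && (snd q <? n)%nat &&
  (snd p =? fst q)%nat && (snd q =? fst s)%nat && (snd s =? fst p)%nat)%bool.

Lemma M_entry n p q s : matmul_tensor n p q s = if Mb n p q s then Defs.C1 else Defs.C0.
Proof.
  unfold matmul_tensor. rewrite tsum_Csum.
  rewrite (Csum_supp n _ (fst p)).
  2:{ intros m Hm Hne. rewrite tsum_Csum. apply Csum_zero. intros j _.
      rewrite tsum_Csum. apply Csum_zero. intros k _. unfold basis3. simpl.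
      destruct (Nat.eqb_spec (fst p) m); [congruence|]. reflexivity. }
  destruct (Nat.ltb_spec (fst p) n) as [H1|H1].
  2:{ unfold Mb. destruct (Nat.ltb_spec (fst p) n); [lia|]. reflexivity. }
  rewrite tsum_Csum. rewrite (Csum_supp n _ (snd p)).
  2:{ intros m Hm Hne. rewrite tsum_Csum. apply Csum_zero. intros k _. unfold basis3. simpl.
      rewrite Nat.eqb_refl.
      destruct (Nat.eqb_spec (snd p) m); [congruence|]. reflexivity. }
  destruct (Nat.ltb_spec (snd p) n) as [H2|H2].
  2:{ unfold Mb. destruct (Nat.ltb_spec (snd p) n); [lia|]. rewrite Bool.andb_false_r. reflexivity. }
  rewrite tsum_Csum. rewrite (Csum_supp n _ (snd q)).
  2:{ intros m Hm Hne. unfold basis3. simpl.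
      destruct (Nat.eqb_spec (snd q) m); [congruence|]. rewrite !Bool.andb_false_r. reflexivity. }
  unfold Mb, basis3. simpl. bdestr; simpl; try reflexivity; try lia.
Qed.

Lemma Rem_entry n p q s : (1 <= n)%nat ->
  tsum n (fun j => basis3 (0%nat, (n - 1)%nat) ((n - 1)%nat, j) (j, 0%nat)) p q s =
  if ((fst p =? 0)%nat && (snd p =? n - 1)%nat)%bool then matmul_tensor n (0%nat, (n-1)%nat) q s else Defs.C0.
Proof.
  intros Hn. rewrite M_entry. rewrite tsum_Csum.
  rewrite (Csum_supp n _ (snd q)).
  2:{ intros m Hm Hne. unfold basis3. simpl.
      destruct (Nat.eqb_spec (snd q) m); [congruence|]. rewrite !Bool.andb_false_r. reflexivity. }
  unfold Mb, basis3. simpl. bdestr; simpl; try reflexivity; try lia.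
Qed.

Definition sw (a b x : nat) : nat := if (x =? a)%nat then b else if (x =? b)%nat then a else x.

Lemma sw_eqb a b x y : (sw a b x =? sw a b y)%nat = (x =? y)%nat.
Proof. unfold sw. destruct (Nat.eqb_spec x a); destruct (Nat.eqb_spec x b); destruct (Nat.eqb_spec y a); destruct (Nat.eqb_spec y b); bdestr; try reflexivity; try lia. Qed.

Lemma sw_ltb a b n x : (a < n)%nat -> (b < n)%nat -> (sw a b x <? n)%nat = (x <? n)%nat.
Proof. intros. unfold sw. bdestr; subst; try reflexivity; try lia. Qed.

Lemma sw_lt a b n x : (a < n)%nat -> (b < n)%nat -> (x < n)%nat -> (sw a b x < n)%nat.
Proof. intros. unfold sw. bdestr; lia. Qed.

Lemma sw_a a b : sw a b a = b.
Proof. unfold sw. rewrite Nat.eqb_refl. reflexivity. Qed.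

Definition pA n i0 j0 (p : idx) : idx := (sw 0 i0 (fst p), sw (n-1) j0 (snd p)).
Definition pB n j0 (q : idx) : idx := (sw (n-1) j0 (fst q), snd q).
Definition pC i0 (s : idx) : idx := (fst s, sw 0 i0 (snd s)).
Definition fA n (t : R) (p : idx) : R :=
  ((if (fst p =? 0)%nat then 1 else t) * (if (snd p =? n-1)%nat then 1 else t))%R.
Definition fB n (t : R) (q : idx) : R := if (fst q =? n-1)%nat then 1%R else (/t)%R.
Definition fC (t : R) (s : idx) : R := if (snd s =? 0)%nat then 1%R else (/t)%R.

Lemma Mb_perm n i0 j0 p q s : (1 <= n)%nat -> (i0 < n)%nat -> (j0 < n)%nat ->
  Mb n (pA n i0 j0 p) (pB n j0 q) (pC i0 s) = Mb n p q s.
Proof.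
  intros. unfold Mb, pA, pB, pC; simpl.
  rewrite !(sw_ltb _ _ n) by lia. rewrite !sw_eqb. reflexivity.
Qed.

Lemma M_inv n t i0 j0 p q s : (1 <= n)%nat -> (i0 < n)%nat -> (j0 < n)%nat -> t <> 0%R ->
  @eq C (RtoC (fA n t p * fB n t q * fC t s) * matmul_tensor n (pA n i0 j0 p) (pB n j0 q) (pC i0 s))
  (matmul_tensor n p q s).
Proof.
  intros H1 H2 H3 Ht. rewrite !M_entry, Mb_perm by assumption.
  destruct (Mb n p q s) eqn:Hb.
  - unfold Mb in Hb. repeat rewrite Bool.andb_true_iff in Hb.
    destruct Hb as [[[[[_ _] _] E1] _] E2].
    apply Nat.eqb_eq in E1. apply Nat.eqb_eq in E2.
    assert (Hf : (fA n t p * fB n t q * fC t s = 1)%R).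
    { unfold fA, fB, fC. rewrite E1, E2.
      destruct (fst p =? 0)%nat; destruct (fst q =? n-1)%nat; field; auto. }
    rewrite Hf. unfold Defs.C1. apply injective_projections; simpl; ring.
  - unfold Defs.C0. apply injective_projections; simpl; ring.
Qed.

Lemma fA_pos n t p : (0 < t)%R -> (0 < fA n t p)%R.
Proof. intros. unfold fA. destruct (fst p =? 0)%nat; destruct (snd p =? n-1)%nat; nra. Qed.

Lemma fA_le1 n t p : (0 < t <= 1)%R -> (fA n t p <= 1)%R.
Proof. intros. unfold fA. destruct (fst p =? 0)%nat; destruct (snd p =? n-1)%nat; nra. Qed.

Lemma fA_le_t n t p : (0 < t <= 1)%R -> ~ (fst p = 0%nat /\ snd p = (n-1)%nat) -> (fA n t p <= t)%R.
Proof.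
  intros. unfold fA. destruct (Nat.eqb_spec (fst p) 0); destruct (Nat.eqb_spec (snd p) (n-1)); try tauto; nra.
Qed.

Lemma fA_E n t : fA n t (0%nat, (n-1)%nat) = 1%R.
Proof. unfold fA. simpl. rewrite Nat.eqb_refl. ring. Qed.

Lemma fBC_bound n t q s : (0 < t <= 1)%R -> (0 < fB n t q * fC t s <= / t * / t)%R.
Proof.
  intros [H0 H1]. assert (1 <= / t)%R.
  { rewrite <- Rinv_1. apply Rinv_le_contravar; lra. }
  assert (0 < /t)%R by (apply Rinv_0_lt_compat; lra).
  unfold fB, fC. destruct (fst q =? n-1)%nat; destruct (snd s =? 0)%nat; nra.
Qed.

Lemma F_bound n t p q s : (0 < t <= 1)%R ->
  (0 < fA n t p * fB n t q * fC t s <= / t * / t)%R.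
Proof.
  intros Ht. pose proof (fA_pos n t p (proj1 Ht)). pose proof (fA_le1 n t p Ht).
  pose proof (fBC_bound n t q s Ht). rewrite Rmult_assoc. nra.
Qed.

Lemma argmax_list {A : Type} (f : A -> R) (l : list A) (x0 : A) : In x0 l ->
  exists x, In x l /\ forall y, In y l -> (f y <= f x)%R.
Proof.
  induction l as [|a l IH] in x0 |- *; intros Hin; [destruct Hin|].
  destruct l as [|b l'].
  - exists a. split; [left; reflexivity|]. intros y [<-|[]]. lra.
  - destruct (IH b (or_introl eq_refl)) as [x [Hx Hmax]].
    destruct (Rle_dec (f a) (f x)).
    + exists x. split; [right; exact Hx|]. intros y [<-|Hy]; [lra|auto].
    + exists a. split; [left; reflexivity|]. intros y [<-|Hy]; [lra|].
      specialize (Hmax y Hy). lra.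
Qed.

Lemma argmax_range (f : idx -> R) n : (1 <= n)%nat ->
  exists p, in_range n p /\ forall q, in_range n q -> (f q <= f p)%R.
Proof.
  intros Hn.
  destruct (argmax_list f (list_prod (seq 0 n) (seq 0 n)) (0%nat, 0%nat)) as [x [Hx Hm]].
  { apply in_prod_iff. rewrite in_seq. lia. }
  exists x. destruct x as [x1 x2]. apply in_prod_iff in Hx. rewrite !in_seq in Hx.
  split; [unfold in_range; simpl; lia|].
  intros [y1 y2] Hy. apply Hm. apply in_prod_iff. rewrite !in_seq. unfold in_range in Hy; simpl in Hy. lia.
Qed.

Lemma Csub_eq (z w : Cx) : Csub z w = Cminus z w.
Proof. reflexivity. Qed.

Lemma Cmod_M n p q s : (Cmod (matmul_tensor n p q s) <= 1)%R.
Proof.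
  rewrite M_entry. destruct (Mb n p q s).
  - unfold Defs.C1. change (1%R, 0%R) with (RtoC 1). rewrite Cmod_1. lra.
  - unfold Defs.C0. change (0%R, 0%R) with (RtoC 0). rewrite Cmod_0. lra.
Qed.

Lemma Cmod_RC (x : R) (z : C) : (0 <= x)%R -> Cmod (RtoC x * z) = (x * Cmod z)%R.
Proof. intros. rewrite Cmod_mult, Cmod_R, Rabs_pos_eq by lra. reflexivity. Qed.

Lemma r_pos n r : (1 <= n)%nat -> border_rank_le n (matmul_tensor n) r -> r <> 0%nat.
Proof.
  intros Hn H Hr. subst r. destruct (H (1/2)%R) as [a [b [c Hc]]]; [lra|].
  assert (HE : in_range n (0%nat, 0%nat)) by (unfold in_range; simpl; lia).
  specialize (Hc _ _ _ HE HE HE). rewrite M_entry in Hc.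
  replace (Mb n (0%nat, 0%nat) (0%nat, 0%nat) (0%nat, 0%nat)) with true in Hc
    by (unfold Mb; simpl; destruct (Nat.ltb_spec 0 n); [reflexivity|lia]).
  unfold sum_rank_one in Hc. simpl in Hc. rewrite Cmod_eq in Hc.
  replace (Csub Defs.C1 Defs.C0) with (RtoC 1) in Hc
    by (unfold Csub, Cadd, Defs.Copp, Defs.C1, Defs.C0; apply injective_projections; simpl; ring).
  rewrite Cmod_1 in Hc. lra.
Qed.

Lemma red_approx n r' : (1 <= n)%nat -> border_rank_le n (matmul_tensor n) (S r') ->
  border_rank_le n (matmul_red n) r'.
Proof.
  intros Hn H eps Heps.
  set (t := Rmin (1/2) (eps/4)).
  assert (Ht : (0 < t <= 1/2)%R) by (unfold t; apply Rmin_case_strong; lra).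
  assert (Hte : (t <= eps/4)%R) by (unfold t; apply Rmin_r).
  assert (Ht1 : (0 < t <= 1)%R) by lra.
  destruct (H (t*t*t)%R) as [a [b [c Hc]]]. { apply Rmult_lt_0_compat; [|lra]. nra. }
  assert (Hex : exists l, (l < S r')%nat /\ exists p, in_range n p /\ a l p <> (0:C)).
  { apply NNPP; intro Hno.
    assert (HE : in_range n (0%nat, 0%nat)) by (unfold in_range; simpl; lia).
    specialize (Hc _ _ _ HE HE HE).
    assert (Hs : sum_rank_one (S r') a b c (0%nat, 0%nat) (0%nat, 0%nat) (0%nat, 0%nat) = (0:C)).
    { unfold sum_rank_one. apply Csum_zero. intros l Hl.
      assert (a l (0%nat, 0%nat) = (0:C)).
      { apply NNPP; intro Hne. apply Hno. exists l. split; [exact Hl|]. exists (0%nat, 0%nat). auto. }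
      change (Cmul (Cmul (a l (0%nat, 0%nat)) (b l (0%nat, 0%nat))) (c l (0%nat, 0%nat))) with
        (a l (0%nat, 0%nat) * b l (0%nat, 0%nat) * c l (0%nat, 0%nat)).
      rewrite H0. cring. }
    rewrite Hs, M_entry in Hc.
    replace (Mb n (0%nat, 0%nat) (0%nat, 0%nat) (0%nat, 0%nat)) with true in Hc
      by (unfold Mb; simpl; destruct (Nat.ltb_spec 0 n); [reflexivity|lia]).
    rewrite Cmod_eq in Hc.
    replace (Csub Defs.C1 (RtoC 0)) with (RtoC 1) in Hc
      by (unfold Csub, Cadd, Defs.Copp, Defs.C1; apply injective_projections; simpl; ring).
    rewrite Cmod_1 in Hc. nra. }
  destruct Hex as [l0 [Hl0 [p0 [Hp0 Hnz]]]].
  destruct (argmax_range (fun p => Cmod (a l0 p)) n Hn) as [ps [Hps Hmax]].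
  simpl in Hmax.
  set (i0 := fst ps). set (j0 := snd ps).
  assert (Hi0 : (i0 < n)%nat) by (apply Hps). assert (Hj0 : (j0 < n)%nat) by (apply Hps).
  assert (Hnz2 : a l0 ps <> (0:C)).
  { apply Cmod_gt_0. apply Cmod_gt_0 in Hnz. specialize (Hmax p0 Hp0). lra. }
  set (E := (0%nat, (n-1)%nat) : idx).
  assert (HpE : pA n i0 j0 E = ps).
  { unfold pA, E. simpl. rewrite !sw_a. destruct ps; reflexivity. }
  assert (HrA : forall p, in_range n p -> in_range n (pA n i0 j0 p)).
  { intros p [? ?]. unfold pA, in_range; simpl. split; apply sw_lt; lia. }
  assert (HrB : forall q, in_range n q -> in_range n (pB n j0 q)).
  { intros q [? ?]. unfold pB, in_range; simpl. split; [apply sw_lt|]; lia. }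
  assert (HrC : forall s, in_range n s -> in_range n (pC i0 s)).
  { intros s [? ?]. unfold pC, in_range; simpl. split; [|apply sw_lt]; lia. }
  assert (HEr : in_range n E) by (unfold E, in_range; simpl; lia).
  set (A' := fun l p => RtoC (fA n t p) * a l (pA n i0 j0 p)).
  set (B' := fun l q => RtoC (fB n t q) * b l (pB n j0 q)).
  set (C' := fun l s => RtoC (fC t s) * c l (pC i0 s)).
  set (w := fun p => A' l0 p / A' l0 E).
  assert (HAE : A' l0 E = a l0 ps).
  { unfold A'. rewrite fA_E, HpE. cring. }
  assert (HAE0 : A' l0 E <> (0:C)) by (rewrite HAE; exact Hnz2).
  set (A'' := fun l p => A' l p - w p * A' l E).
  exists (fun l => A'' (skip l0 l)), (fun l => B' (skip l0 l)), (fun l => C' (skip l0 l)).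
  intros p q s Hp Hq Hs.
  set (SS := sum_rank_one (S r') a b c).
  assert (Xsum : forall p, Csum (S r') (fun l => A' l p * B' l q * C' l s) =
     RtoC (fA n t p * fB n t q * fC t s) * SS (pA n i0 j0 p) (pB n j0 q) (pC i0 s)).
  { intros p1. unfold SS, sum_rank_one. rewrite <- Csum_scal. apply Csum_ext. intros l _.
    unfold A', B', C'. rewrite !RtoC_mult. cring. }
  assert (Hsum : sum_rank_one r' (fun l => A'' (skip l0 l)) (fun l => B' (skip l0 l))
                   (fun l => C' (skip l0 l)) p q s =
     RtoC (fA n t p * fB n t q * fC t s) * SS (pA n i0 j0 p) (pB n j0 q) (pC i0 s)
     - w p * (RtoC (fA n t E * fB n t q * fC t s) * SS (pA n i0 j0 E) (pB n j0 q) (pC i0 s))).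
  { unfold sum_rank_one. rewrite <- !Xsum. rewrite <- Csum_lin.
    transitivity (Csum (S r') (fun l => A'' l p * B' l q * C' l s)).
    - symmetry. apply (Csum_skip r' l0 (fun l => A'' l p * B' l q * C' l s)); [lia|].
      unfold A'', w. field. exact HAE0.
    - apply Csum_ext. intros l _. unfold A''. cring. }
  unfold matmul_red, tsub. rewrite Hsum, Rem_entry by exact Hn.
  rewrite Cmod_eq, !Csub_eq.
  rewrite <- (M_inv n t i0 j0 p q s) by (auto; lra).
  assert (HD : forall p, in_range n p ->
    (Cmod (matmul_tensor n (pA n i0 j0 p) (pB n j0 q) (pC i0 s) - SS (pA n i0 j0 p) (pB n j0 q) (pC i0 s)) < t*t*t)%R).
  { intros p1 Hp1. pose proof (Hc _ _ _ (HrA p1 Hp1) (HrB q Hq) (HrC s Hs)) as Hc1.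
    rewrite Cmod_eq, Csub_eq in Hc1. exact Hc1. }
  assert (HFD : forall p, in_range n p ->
    (Cmod (RtoC (fA n t p * fB n t q * fC t s) *
       (matmul_tensor n (pA n i0 j0 p) (pB n j0 q) (pC i0 s) - SS (pA n i0 j0 p) (pB n j0 q) (pC i0 s))) <= t)%R).
  { intros p1 Hp1. pose proof (F_bound n t p1 q s Ht1) as HF. rewrite Cmod_RC by lra.
    pose proof (HD p1 Hp1). pose proof (Cmod_ge_0 (matmul_tensor n (pA n i0 j0 p1) (pB n j0 q) (pC i0 s) - SS (pA n i0 j0 p1) (pB n j0 q) (pC i0 s))).
    apply Rle_trans with ((/t * /t) * (t*t*t))%R.
    - apply Rmult_le_compat; lra.
    - right. field. lra. }
  assert (Hw : (Cmod (w p) <= fA n t p)%R).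
  { unfold w. rewrite Cmod_div by exact HAE0. rewrite HAE. unfold A'.
    rewrite Cmod_RC by (pose proof (fA_pos n t p (proj1 Ht1)); lra).
    pose proof (Hmax _ (HrA p Hp)). apply Cmod_gt_0 in Hnz2.
    pose proof (fA_pos n t p (proj1 Ht1)).
    unfold Rdiv. apply Rle_trans with (fA n t p * Cmod (a l0 ps) * / Cmod (a l0 ps))%R.
    - apply Rmult_le_compat_r; [left; apply Rinv_0_lt_compat; lra|]. nra.
    - right. field. lra. }
  destruct ((fst p =? 0)%nat && (snd p =? n-1)%nat)%bool eqn:HbE.
  -
    apply Bool.andb_true_iff in HbE. destruct HbE as [Ep1 Ep2].
    apply Nat.eqb_eq in Ep1. apply Nat.eqb_eq in Ep2.
    assert (HpE' : p = E) by (destruct p as [x y]; unfold E; simpl in Ep1, Ep2; subst x y; reflexivity).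
    subst p.
    assert (HwE : w E = 1) by (unfold w; field; exact HAE0).
    rewrite HwE. fold E. rewrite <- (M_inv n t i0 j0 E q s) by (auto; lra).
    match goal with |- (Cmod ?z < _)%R => replace z with (RtoC 0) by cring end.
    rewrite Cmod_0. lra.
  - assert (HnE : ~ (fst p = 0%nat /\ snd p = (n-1)%nat)).
    { intros [Ep1 Ep2]. rewrite Ep1, Ep2, !Nat.eqb_refl in HbE. discriminate. }
    assert (Hwt : (Cmod (w p) <= t)%R) by (pose proof (fA_le_t n t p Ht1 HnE); lra).
    assert (Hw1 : (Cmod (w p) <= 1)%R) by lra.
    set (F1 := RtoC (fA n t p * fB n t q * fC t s)).
    set (FE := RtoC (fA n t E * fB n t q * fC t s)).
    set (m1 := matmul_tensor n (pA n i0 j0 p) (pB n j0 q) (pC i0 s)).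
    set (s1 := SS (pA n i0 j0 p) (pB n j0 q) (pC i0 s)).
    set (mE := matmul_tensor n (pA n i0 j0 E) (pB n j0 q) (pC i0 s)).
    set (sE := SS (pA n i0 j0 E) (pB n j0 q) (pC i0 s)).
    fold E. assert (HME : FE * mE = matmul_tensor n E q s) by (apply M_inv; auto; lra).
    match goal with |- (Cmod ?z < _)%R =>
      replace z with (F1 * (m1 - s1) + (- w p * (FE * (mE - sE)) + w p * (FE * mE))) by cring end.
    rewrite HME.
    pose proof (HFD p Hp) as B1. pose proof (HFD E HEr) as B2.
    pose proof (Cmod_M n E q s) as B3.
    eapply Rle_lt_trans; [apply Cmod_triangle|].
    eapply Rle_lt_trans; [apply Rplus_le_compat_l; apply Cmod_triangle|].
    rewrite !Cmod_mult, Cmod_opp. fold F1 m1 s1 in B1. fold FE mE sE in B2.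
    pose proof (Cmod_ge_0 (w p)). pose proof (Cmod_ge_0 (FE * (mE - sE))).
    pose proof (Cmod_ge_0 (matmul_tensor n E q s)).
    rewrite Cmod_mult in B1, B2.
    pose proof (Cmod_ge_0 F1). pose proof (Cmod_ge_0 (m1 - s1)).
    pose proof (Cmod_ge_0 FE). pose proof (Cmod_ge_0 (mE - sE)).
    assert (W1 : (Cmod (w p) * (Cmod FE * Cmod (mE - sE)) <= t * t)%R)
      by (apply Rmult_le_compat; nra).
    assert (W2 : (Cmod (w p) * Cmod (matmul_tensor n E q s) <= t * 1)%R)
      by (apply Rmult_le_compat; nra).
    nra.
Qed.

Theorem corollary5p3 (n : nat) (Hn : (2 <= n)%nat) (r rred : nat) :
  is_border_rank n (matmul_tensor n) r ->
  is_border_rank n (matmul_red n) rred ->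
  (rred + 1 <= r)%nat.
Proof.
  intros [H1 _] [_ H2].
  assert (Hn1 : (1 <= n)%nat) by lia.
  pose proof (r_pos n r Hn1 H1) as Hr.
  destruct r as [|r']; [contradiction|].
  specialize (H2 r' (red_approx n r' Hn1 H1)). lia.
Qed.
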